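(* A maximal ideal $M$ of $B_1(\mathbb{R})$ is real if and only if it is fixed, i.e. if and only if $M=\{f\in B_1(\mathbb{R}): f(p)=0\}$ for some $p\in\mathbb{R}$.
   Context: $B_1(\mathbb{R})$ denotes the ring (pointwise operations and order) of Baire one functions $\mathbb{R}\to\mathbb{R}$, i.e. pointwise limits of sequences of continuous functions. For $f$, $Z(f)=\{x: f(x)=0\}$. A proper ideal $I$ is fixed if $\bigcap_{f\in I}Z(f)\neq\emptyset$. For a maximal ideal $M$, $M(f)=f+M$, and $\Phi:\mathbb{R}\to B_1(\mathbb{R})/M$, $\Phi(r)=M(\mathbf r)$ ($\mathbf r$ the constant function $r$); $M$ is real if $\Phi$ is surjective. *)

(* Defs.v *)
From Stdlib Require Import Reals.
Open Scope R_scope.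

Definition Baire1 (f : R -> R) : Prop :=
  exists g : nat -> R -> R,
    (forall n, continuity (g n)) /\ (forall x, Un_cv (fun n => g n x) (f x)).

Definition is_ideal (I : (R -> R) -> Prop) : Prop :=
  (forall f, I f -> Baire1 f) /\
  I (fun _ => 0) /\
  (forall f g, I f -> I g -> I (fun x => f x + g x)) /\
  (forall f g, I f -> Baire1 g -> I (fun x => g x * f x)).

Definition is_proper (I : (R -> R) -> Prop) : Prop :=
  exists f, Baire1 f /\ ~ I f.

Definition is_maximal_ideal (M : (R -> R) -> Prop) : Prop :=
  is_ideal M /\ is_proper M /\
  forall J, is_ideal J -> is_proper J -> (forall f, M f -> J f) ->
            forall f, J f -> M f.

Definition Z (f : R -> R) (x : R) : Prop := f x = 0.

Definition is_fixed (I : (R -> R) -> Prop) : Prop :=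
  exists p, forall f, I f -> Z f p.

(* M real iff Phi : r |-> M(r) is surjective onto B_1(R)/M, i.e. every
   f in B_1(R) is congruent mod M to a constant. *)
Definition is_real_ideal (M : (R -> R) -> Prop) : Prop :=
  forall f, Baire1 f -> exists r : R, M (fun x => f x - r).

(* Main.v *)
Require Import Defs.
From Stdlib Require Import Reals Lra FunctionalExtensionality.
Open Scope R_scope.

Lemma cont_id : continuity (fun x => x).
Proof. apply derivable_continuous; apply derivable_id. Qed.

Lemma cv_const (c : R) : Un_cv (fun _ => c) c.
Proof. intros e He; exists 0%nat; intros; unfold Rdist; rewrite Rminus_eq_0, Rabs_R0; lra. Qed.

Lemma cv_ext (u v : nat -> R) l1 l2 : (forall n, u n = v n) -> l1 = l2 -> Un_cv u l1 -> Un_cv v l2.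
Proof.
  intros H1 H2 H e He; destruct (H e He) as [N HN]; exists N; intros n Hn;
  rewrite <- H1, <- H2; auto.
Qed.

Lemma B1_cont f : continuity f -> Baire1 f.
Proof. intros Hf; exists (fun _ => f); split; auto; intros x; apply cv_const. Qed.

Lemma B1_plus f g : Baire1 f -> Baire1 g -> Baire1 (fun x => f x + g x).
Proof.
  intros [a [Ha Ha']] [b [Hb Hb']]; exists (fun n x => a n x + b n x); split.
  - intros n; exact (continuity_plus _ _ (Ha n) (Hb n)).
  - intros x; apply CV_plus; auto.
Qed.

Lemma B1_mult f g : Baire1 f -> Baire1 g -> Baire1 (fun x => f x * g x).
Proof.
  intros [a [Ha Ha']] [b [Hb Hb']]; exists (fun n x => a n x * b n x); split.
  - intros n; exact (continuity_mult _ _ (Ha n) (Hb n)).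
  - intros x; apply CV_mult; auto.
Qed.

Lemma B1_inv h : Baire1 h -> (forall x, 0 < h x) -> Baire1 (fun x => / h x).
Proof.
  intros [g [Hg Hg']] Hpos.
  exists (fun n x => g n x * / (g n x * g n x + / pow_2_n n)); split.
  - intros n.
    assert (Hp : 0 < / pow_2_n n) by (apply Rinv_0_lt_compat; unfold pow_2_n; apply pow_lt; lra).
    change (continuity (g n * / (g n * g n + fct_cte (/ pow_2_n n)))%F).
    apply continuity_mult; [apply Hg|].
    apply continuity_inv.
    + apply continuity_plus; [apply continuity_mult; apply Hg|apply continuity_const; intros ? ?; reflexivity].
    + intros x; unfold plus_fct, mult_fct, fct_cte.
      assert (0 <= g n x * g n x) by apply Rle_0_sqr. lra.
  - intros x.
    assert (Hd : Un_cv (fun n => g n x * g n x + / pow_2_n n) (h x * h x + 0)).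
    { apply CV_plus; [apply CV_mult; apply Hg'|apply cv_infty_cv_0, pow_2_n_infty]. }
    assert (Hnz : h x * h x + 0 <> 0) by (specialize (Hpos x); nra).
    assert (Hi := continuity_seq (/ (fun y => y))%F _ _ (continuity_pt_inv (fun y => y) (h x * h x + 0) (cont_id _) Hnz) Hd).
    pose proof (CV_mult _ _ _ _ (Hg' x) Hi) as Hm.
    refine (cv_ext _ _ _ _ _ _ Hm); [intros; reflexivity|].
    specialize (Hpos x). unfold inv_fct. field. lra.
Qed.

Theorem mainTheorem20 (M : (R -> R) -> Prop) (HM : is_maximal_ideal M) :
  (is_real_ideal M <-> is_fixed M) /\
  (is_fixed M <-> exists p : R, forall f, M f <-> (Baire1 f /\ f p = 0)).
Proof.
  destruct HM as [[HB [H0 [Hadd Hmul]]] [[f0 [Hf0 Hnf0]] Hmax]].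
  assert (fix_char : is_fixed M -> exists p : R, forall f, M f <-> (Baire1 f /\ f p = 0)).
  { intros [p Hp]; exists p.
    set (J := fun f => Baire1 f /\ f p = 0).
    assert (HJ : is_ideal J).
    { unfold is_ideal; split; [|split; [|split]].
      - intros f [Hf _]; exact Hf.
      - split; [apply B1_cont, continuity_const; intros ? ?; reflexivity| reflexivity].
      - intros f g [Hf Hfp] [Hg Hgp]; split; [apply B1_plus; auto|rewrite Hfp, Hgp; ring].
      - intros f g [Hf Hfp] Hg; split; [apply B1_mult; auto|rewrite Hfp; ring]. }
    assert (HJp : is_proper J).
    { exists (fun _ => 1); split.
      - apply B1_cont, continuity_const; intros ? ?; reflexivity.
      - intros [_ H]; lra. }
    intros f; split.
    - intros Hf; split; [apply HB; auto| apply Hp; auto].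
    - intros Hf; apply (Hmax J HJ HJp); auto.
      intros g Hg; split; [apply HB; auto|apply Hp; auto]. }
  assert (char_fix : (exists p : R, forall f, M f <-> (Baire1 f /\ f p = 0)) -> is_fixed M).
  { intros [p Hp]; exists p; intros f Hf; apply Hp; auto. }
  split; [|split; auto].
  split.
  - intros Hreal.
    destruct (Hreal (fun x => x) (B1_cont _ cont_id)) as [r Hr].
    exists r; intros g Hg; change (g r = 0).
    destruct (Req_dec (g r) 0) as [E|E]; auto; exfalso.
    set (h := fun x => (x - r) * (x - r) + g x * g x).
    assert (Mh : M h).
    { apply (Hadd (fun x => (x - r) * (x - r)) (fun x => g x * g x)).
      - apply (Hmul (fun x => x - r) (fun x => x - r)); auto; apply HB; auto.
      - apply Hmul; auto. }
    assert (Hpos : forall x, 0 < h x).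
    { intros x; unfold h. destruct (Req_dec x r) as [->|Ex].
      - assert (0 < g r * g r) by (apply Rsqr_pos_lt; auto). nra.
      - assert (0 < (x - r) * (x - r)) by (apply Rsqr_pos_lt; lra).
        assert (0 <= g x * g x) by apply Rle_0_sqr. lra. }
    assert (M1 : M (fun _ => 1)).
    { assert (Hm := Hmul h (fun x => / h x) Mh (B1_inv h (HB h Mh) Hpos)).
      replace (fun _ : R => 1) with (fun x => / h x * h x); auto.
      apply functional_extensionality; intros x; field; specialize (Hpos x); lra. }
    apply Hnf0.
    replace f0 with (fun x => f0 x * 1); [apply Hmul; auto|].
    apply functional_extensionality; intros; ring.
  - intros Hfix; destruct (fix_char Hfix) as [p Hp].
    intros f Hf; exists (f p); apply Hp; split.
    + apply B1_plus; auto.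
      apply B1_cont, continuity_const; intros ? ?; reflexivity.
    + ring.
Qed.
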